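(* Let $G_{\max}>0$ and $\mu>0$ be real constants, and let $N_r\ge 1$ and $N_t\ge 2$ be integers. Let $\Delta G_{1},\dots,\Delta G_{2N_t}$ be i.i.d. half-normal random variables, $\Delta G_j\sim|\mathcal{N}(0,G_{\max}^2/9)|$ (i.e. $\Delta G_j=|Z_j|$ with $Z_j\sim\mathcal{N}(0,G_{\max}^2/9)$), and set $T_j=\Delta G_j/\mu$ for $j=1,\dots,2N_t$. Define the row latency $T^{\mathsf{row}}=\max_{1\le j\le 2N_t}T_j$ and the expected write latency $T_{\mathsf{write}}=2N_r\,\mathbb{E}[T^{\mathsf{row}}]$. Then $$T_{\mathsf{write}}\le \frac{2\sqrt{2}\,G_{\max}}{3\mu}\,N_r\left(\sqrt{\ln N_t}+\frac{1}{\sqrt{\pi}\,\ln N_t}\right).$$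
   Context: Interpretation (model from the paper): a real-mapped $N_r\times N_t$ complex Rayleigh-fading channel matrix (a $2N_r\times 2N_t$ real matrix whose entries are $\mathcal{N}(0,G_{\max}^2/9)$, scaled by the three-sigma rule into conductance range $[-G_{\max},G_{\max}]$) is written row by row into a fully reset one-transistor-one-resistor RRAM array using differential device pairs; each device's conductance must increase by $\Delta G_j$, the magnitude of its target entry. Under the write-without-verification scheme the conductance grows at deterministic rate $\mu$ (in expectation), so writing a device takes time $\Delta G_j/\mu$; a row takes the maximum of its $2N_t$ device times, and the real-mapped matrix consists of two identical processes of $N_r$ rows each, giving $T_{\mathsf{write}}=2N_r\mathbb{E}[T^{\mathsf{row}}]$. *)

(* Defs.v *)
From HB Require Import structures.
From mathcomp Require Import all_boot all_order all_algebra.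
From mathcomp Require Import all_classical all_reals all_analysis.
Set Implicit Arguments. Unset Strict Implicit. Unset Printing Implicit Defensive.
Import Order.TTheory GRing.Theory Num.Theory.
Import numFieldTopology.Exports.
Local Open Scope classical_set_scope.
Local Open Scope ring_scope.

Definition mutually_independent_RV {d} {T : measurableType d} {R : realType}
  (P : probability T R) (n : nat) (Z : 'I_n -> {RV P >-> R}) : Prop :=
  forall (J : {set 'I_n}) (B : 'I_n -> set R),
    (forall j, j \in J -> measurable (B j)) ->
    P (\bigcap_(j in [set j | j \in J]) (Z j @^-1` B j)) =
    (\prod_(j in J) P (Z j @^-1` B j))%E.

(* Z has the normal distribution N(m, s^2) (s = standard deviation). *)
Definition normally_distributed {d} {T : measurableType d} {R : realType}
  (P : probability T R) (X : {RV P >-> R}) (m s : R) : Prop :=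
  forall A : set R, measurable A -> distribution P X A = normal_prob m s A.

Definition row_latency {d} {T : measurableType d} {R : realType}
  (P : probability T R) (Nt : nat) (Z : 'I_(2 * Nt) -> {RV P >-> R}) (mu : R)
  : T -> R :=
  fun w => \big[Num.max/0]_(j < 2 * Nt) (`|Z j w| / mu).

Definition write_latency {d} {T : measurableType d} {R : realType}
  (P : probability T R) (Nr Nt : nat) (Z : 'I_(2 * Nt) -> {RV P >-> R}) (mu : R)
  : \bar R :=
  ((2 * Nr)%:R%:E * 'E_P[row_latency Z mu])%E.

(* Main.v *)
Require Import Defs.
From HB Require Import structures.
From mathcomp Require Import all_boot all_order all_algebra.
From mathcomp Require Import all_classical all_reals all_analysis.
From mathcomp Require Import measurable_realfun ring lra.
Import Order.TTheory GRing.Theory Num.Theory.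
Import numFieldNormedType.Exports.
Local Open Scope ring_scope.

Section helpers_density.
Local Open Scope classical_set_scope.

Lemma normal_density (R : realType) (s : R) (f : R -> \bar R) :
  (forall x, 0 <= f x)%E -> measurable_fun [set: R] f ->
  (\int[normal_prob 0 s]_x f x =
   \int[lebesgue_measure]_x (f x * (normal_pdf 0 s x)%:E))%E.
Proof.
move=> f0 mf.
rewrite -(Radon_Nikodym_SigmaFinite.change_of_variables (normal_prob_dominates 0 s)) //.
apply: ae_eq_integral => //.
- apply: emeasurable_funM => //.
  apply: (measurable_int lebesgue_measure).
  exact: Radon_Nikodym_SigmaFinite.f_integrable (normal_prob_dominates 0 s).
- apply: emeasurable_funM => //; apply/measurable_EFinP.
  exact: measurable_normal_pdf.
- apply: ae_eqe_mul2l.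
  apply: integral_ae_eq => //.
  + exact: Radon_Nikodym_SigmaFinite.f_integrable (normal_prob_dominates 0 s).
  + by apply/measurable_EFinP; exact: measurable_normal_pdf.
  + move=> E _ mE.
    by rewrite -(Radon_Nikodym_SigmaFinite.f_integral (normal_prob_dominates 0 s)).
Qed.

End helpers_density.

Section helpers_calc.
Local Open Scope classical_set_scope.

Section S.
Context {R : realType}.

Lemma is_derive_expR_comp (L : R -> R) (x dL : R) :
  is_derive x 1 L dL -> is_derive x 1 (expR \o L) (expR (L x) * dL).
Proof.
move=> hL.
have dL' : derivable L x 1 by exact: ex_derive.
apply: DeriveDef.
  apply/derivable1_diffP; apply: differentiable_comp; apply/derivable1_diffP => //.
rewrite -derive1E derive1_comp //.
by rewrite derive1E derive1E !derive_val.
Qed.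

Lemma lin_is_derive (b c x : R) : is_derive x 1 (fun y : R => - b * (y - c)) (- b).
Proof.
have -> : (fun y : R => - b * (y - c)) = (- b) \*: (id - cst c).
  by apply/funext => y.
apply: is_derive_eq.
by rewrite subr0 /GRing.scale /= mulr1.
Qed.
End S.
Section T.
Context {R : realType}.
Lemma cvg_Eexp (a c : R) : 0 < a ->
  expR (- a * (y - c)) @[y --> +oo] --> (0:R).
Proof.
move=> a0.
have -> : (fun y => expR (- a * (y - c))) = (fun y => expR (a * c) * expR (- (a * y))).
  by apply/funext => y; rewrite -expRD; congr expR; ring.
rewrite -(mulr0 (expR (a * c))).
apply: cvgMr.
apply: (@cvg_comp _ _ _ (fun y => a * y) (fun z => expR (- z)) _ (pinfty_nbhs R)); last exact: cvgr_expR.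
apply: gt0_cvgMry => //.
Qed.
End T.
Section U.
Context {R : realType}.
Local Notation mu := (@lebesgue_measure R).

Lemma int_gamma2 (b c : R) : 0 < b ->
  (\int[mu]_(x in `[c, +oo[) ((x - c) * expR (- b * (x - c)))%:E = ((b ^+ 2)^-1)%:E)%E.
Proof.
move=> b0.
pose E := fun y : R => expR (- b * (y - c)).
pose F := fun y : R => - ((y - c) / b + (b ^+ 2)^-1) * E y.
have sE : forall k v : R, k *: v = k * v by [].
have dE : forall x : R, is_derive x 1 E (E x * (- b)).
  move=> x; have h := is_derive_expR_comp _ _ _ (lin_is_derive b c x).
  exact: h.
have dF : forall x : R, is_derive x 1 F ((x - c) * E x).
  move=> x.
  have dG : is_derive x 1 (fun y : R => - ((y - c) / b + (b ^+ 2)^-1)) (- b^-1).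
    have -> : (fun y : R => - ((y - c) / b + (b ^+ 2)^-1)) =
       (- b^-1) \*: (id - cst c) - cst ((b ^+ 2)^-1).
      apply/funext => y /=; rewrite !fctE.
      change (- ((y - c) / b + b ^- 2) = - b^-1 * (y - c) - b ^- 2); ring.
    apply: is_derive_eq.
    by change (- b^-1 * (1 - 0) - 0 = - b^-1); ring.
  have -> : F = (fun y => - ((y - c) / b + (b ^+ 2)^-1)) * E by [].
  apply: is_derive_eq.
  rewrite /GRing.scale /=. rewrite /E. field. by rewrite gt_eqF.
have cE : continuous E.
  move=> x; apply: differentiable_continuous; apply/derivable1_diffP.
  by have := dE x; move=> ?; exact: ex_derive.
have cF : continuous F.
  move=> x; apply: differentiable_continuous; apply/derivable1_diffP.
  by have := dF x; move=> ?; exact: ex_derive.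
have cf : continuous (fun x : R => (x - c) * E x).
  move=> x; apply: cvgM; last exact: cE.
  by apply: cvgB; [exact: cvg_id | exact: cvg_cst].
rewrite (@ge0_continuous_FTC2y _ (fun x : R => (x - c) * E x) F c 0).
- rewrite -EFinB; congr EFin.
  by rewrite /F /E subrr mulr0 expR0 mulr1 mul0r; ring.
- by move=> x cx; rewrite mulr_ge0 ?subr_ge0 // expR_ge0.
- exact: continuous_subspaceT.
- have hE : E x @[x --> +oo] --> (0:R) by exact: cvg_Eexp.
  have ub : forall u : R, u * expR (- u) <= 1.
    move=> u; rewrite expRN ler_pdivrMr ?expR_gt0 // mul1r.
    by apply: le_trans (expR_ge1Dx u); lra.
  have b20 : 0 < b / 2 by rewrite divr_gt0.
  have hE2 : (x - c) * E x @[x --> +oo] --> (0:R).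
    apply: (@squeeze_cvgr _ _ _ _ (fun=> 0) (fun x => (2 / b) * expR (- (b / 2) * (x - c)))).
    + near=> x.
      have xc : c <= x by near: x; apply: nbhs_pinfty_ge; exact: num_real.
      apply/andP; split; first by rewrite mulr_ge0 ?subr_ge0 // expR_ge0.
      have -> : (x - c) * E x = (2 / b) * ((b / 2 * (x - c)) * expR (- (b / 2 * (x - c)))) * expR (- (b / 2) * (x - c)).
        rewrite /E (_ : - b * (x - c) = - (b / 2 * (x - c)) + - (b / 2) * (x - c)); last by field.
        by rewrite expRD; field; rewrite gt_eqF.
      apply: (@le_trans _ _ ((2 / b) * 1 * expR (- (b / 2) * (x - c)))); last by rewrite mulr1.
      by rewrite ler_wpM2r ?expR_ge0 // ler_wpM2l ?ub // divr_ge0 // (ltW b0).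
    + exact: cvg_cst.
    + rewrite -(mulr0 (2 / b)); apply: cvgMr; exact: cvg_Eexp.
  have -> : F = (fun x => (- b^-1) * ((x - c) * E x) + (- (b ^+ 2)^-1) * E x).
    by apply/funext => x; rewrite /F; field; rewrite gt_eqF.
  have -> : (0:R) = - b^-1 * 0 + - (b ^+ 2)^-1 * 0 by ring.
  by apply: cvgD; apply: cvgMr.
- by move=> x _; have := dF x => ?; exact: ex_derive.
- exact: cvg_at_right_filter (cF c).
- by move=> x _; rewrite derive1E; exact: derive_val.
Unshelve. all: end_near. Qed.
End U.


Section V.
Context {R : realType}.
Local Notation mu := (@lebesgue_measure R).

Lemma cont_m (c : R) : continuous (fun x : R => Num.max 0 (`|x| - c)).
Proof.
have -> : (fun x : R => Num.max 0 (`|x| - c)) = (cst 0 \max (fun x : R => `|x| - c)) by [].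
apply: max_fun_continuous; first exact: cst_continuous.
move=> x; apply: cvgB; [exact: norm_continuous | exact: cvg_cst].
Qed.

Lemma cont_k (c b K : R) : continuous (fun x : R =>
   K * (Num.max 0 (`|x| - c) * expR (- b * Num.max 0 (`|x| - c)))).
Proof.
move=> x; apply: cvgMr; apply: cvgM; first exact: cont_m.
apply: continuous_comp; last exact: continuous_expR.
apply: cvgMr; exact: cont_m.
Qed.

Lemma tail_bound (s c : R) : 0 < s -> 0 < c ->
  (\int[mu]_x (Num.max 0 (`|x| - c) * normal_pdf 0 s x)%:E <=
   (2 * (normal_peak s * expR (- c ^+ 2 / (s ^+ 2 *+ 2))) * ((c / s ^+ 2) ^+ 2)^-1)%:E)%E.
Proof.
move=> s0 c0.
set b := c / s ^+ 2.
set K := normal_peak s * expR (- c ^+ 2 / (s ^+ 2 *+ 2)).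
have b0 : 0 < b by rewrite divr_gt0 // exprn_gt0.
have K0 : 0 <= K by rewrite mulr_ge0 ?normal_peak_ge0 ?expR_ge0.
pose m := fun x : R => Num.max 0 (`|x| - c).
have m0 : forall x, 0 <= m x by move=> x; rewrite /m le_max lexx.
pose k := fun x : R => K * (m x * expR (- b * m x)).
have k0 : forall x, 0 <= k x by move=> x; rewrite mulr_ge0 // mulr_ge0 // expR_ge0.
have ck : continuous k by exact: cont_k.
apply: (@le_trans _ _ (\int[mu]_x (k x)%:E)%E).
  apply: ge0_le_integral => //.
  - by move=> x _; rewrite lee_fin mulr_ge0 // ?normal_pdf_ge0 // le_max lexx.
  - apply/measurable_EFinP; apply: measurable_funM.
      exact: continuous_measurable_fun (cont_m c).
    exact: measurable_normal_pdf.
  - by apply/measurable_EFinP; exact: continuous_measurable_fun.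
  - move=> x _; rewrite lee_fin.
    have s0' : s != 0 by rewrite gt_eqF.
    rewrite /normal_pdf (negbTE s0') /k /K -/(m x).
    have [hx|hx] := leP (`|x|) c.
      by rewrite /m max_l ?subr_le0 // !mul0r mulr0.
    have mx : m x = `|x| - c by rewrite /m max_r // subr_ge0 ltW.
    rewrite mx mulrCA -mulrA ler_wpM2l ?normal_peak_ge0 // [X in _ <= X]mulrCA ler_wpM2l ?subr_ge0 ?(ltW hx) //.
    rewrite -expRD /normal_fun ler_expR subr0.
    rewrite -(real_normK (num_real x)).
    set a := `|x|.
    have -> : - c ^+ 2 / (s ^+ 2 *+ 2) + - b * (a - c) =
              - a ^+ 2 / (s ^+ 2 *+ 2) + (a - c) ^+ 2 / (s ^+ 2 *+ 2).
      rewrite /b; field; by rewrite gt_eqF.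
    by rewrite lerDl divr_ge0 // ?sqr_ge0 // mulrn_wge0 // sqr_ge0.
rewrite ge0_symfun_integralT //; last by move=> x; rewrite /k /m /= normrN.
have -> : [set x : R | 0 <= x] = [set` `[0, c[%R] `|` [set` `[c, +oo[%R].
  apply/seteqP; split => x /=.
    move=> x0; have [xc|xc] := ltP x c.
      by left; rewrite /= in_itv /= x0 xc.
    by right; rewrite /= in_itv /= xc.
  case; rewrite /= in_itv /=; first by case/andP.
  by rewrite andbT => /(le_trans (ltW c0)).
have mk : measurable_fun setT (fun x => (k x)%:E).
  by apply/measurable_EFinP; exact: continuous_measurable_fun.
rewrite ge0_integral_setU //=; last 3 first.
- exact: measurable_funTS.
- by move=> x _; rewrite lee_fin.
- apply/disj_setPS => x [] /=; rewrite !in_itv /= => /andP[_ xc] /andP[cx _].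
  by move: (lt_le_trans xc cx); rewrite ltxx.
rewrite integral0_eq ?add0e; last first.
  move=> x /=; rewrite in_itv /= => /andP[x0 xc].
  by rewrite /k /m max_l ?mul0r ?mulr0 // subr_le0 ger0_norm // ltW.
have -> : (\int[mu]_(x in `[c, +oo[) (k x)%:E = \int[mu]_(x in `[c, +oo[)
     (K%:E * ((x - c) * expR (- b * (x - c)))%:E))%E.
  apply: eq_integral => x; rewrite inE /= in_itv /= andbT => cx.
  by rewrite /k /m max_r ?subr_ge0 ger0_norm // ?(le_trans (ltW c0)) // EFinM.
rewrite ge0_integralZl //; last 2 first.
- apply/measurable_EFinP; apply: measurable_funTS.
  apply: continuous_measurable_fun => x; apply: cvgM.
    by apply: cvgB; [exact: cvg_id | exact: cvg_cst].
  apply: continuous_comp; last exact: continuous_expR.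
  by apply: cvgMr; apply: cvgB; [exact: cvg_id | exact: cvg_cst].
- by move=> x; rewrite /= in_itv /= andbT => cx; rewrite lee_fin mulr_ge0 ?expR_ge0 // subr_ge0.
rewrite int_gamma2 //.
by rewrite -!EFinM mulrA.
Qed.
End V.

End helpers_calc.

Lemma meas_bigmax d (T : measurableType d) (R : realType) n (F : 'I_n -> T -> R) :
  (forall j, measurable_fun setT (F j)) ->
  measurable_fun setT (fun w => \big[Num.max/0]_(j < n) F j w).
Proof.
elim: n F => [|n IH] F mF.
  by under eq_fun do rewrite big_ord0; exact: measurable_cst.
have -> : (fun w => \big[Num.max/0]_(j < n.+1) F j w) =
  (F ord0 \max (fun w => \big[Num.max/0]_(j < n) F (lift ord0 j) w)).
  by apply/funext => w; rewrite big_ord_recl.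
apply: measurable_maxr; first exact: mF.
exact: (IH (fun j => F (lift ord0 j)) (fun j => mF _)).
Qed.

Lemma toLeb_meas d (T : measurableType d) (R : realType) (P : probability T R)
  (X : {RV P >-> R}) : measurable_fun [set: T] (X : T -> measurableTypeR R).
Proof. exact: (@measurable_funPT _ _ _ _ X). Qed.

Definition toLeb d (T : measurableType d) (R : realType) (P : probability T R)
  (X : {RV P >-> R}) : {mfun T >-> measurableTypeR R} :=
  HB.pack (X : T -> measurableTypeR R)
    (isMeasurableFun.Build _ _ _ _ _ (@toLeb_meas _ _ _ _ X)).

Theorem theorem1 (R : realType) (d : measure_display) (T : measurableType d)
  (P : probability T R) (Gmax mu : R) (Nr Nt : nat)
  (Z : 'I_(2 * Nt) -> {RV P >-> R}) :
  0 < Gmax -> 0 < mu -> (1 <= Nr)%N -> (2 <= Nt)%N ->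
  mutually_independent_RV Z ->
  (forall j, normally_distributed (Z j) 0 (Gmax / 3)) ->
  (write_latency Nr Z mu <=
   ((2 * Num.sqrt 2 * Gmax) / (3 * mu) * Nr%:R *
    (Num.sqrt (ln Nt%:R) + 1 / (Num.sqrt pi * ln Nt%:R)))%:E)%E.
Proof.
move=> G0 mu0 Nr1 Nt2 _ HZ.
set s := Gmax / 3.
have s0 : 0 < s by rewrite divr_gt0.
set L := ln Nt%:R.
have L0 : 0 < L by apply: ln_gt0; rewrite ltr1n.
set c := s * Num.sqrt (2 * L).
have c0 : 0 < c by rewrite mulr_gt0 // sqrtr_gt0 mulr_gt0.
set h := fun x : R => Num.max 0 (`|x| - c).
have h0 : forall x, 0 <= h x by move=> x; rewrite /h le_max lexx.
have mh : measurable_fun setT h by exact: continuous_measurable_fun (cont_m c).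
set Tb := 2 * (normal_peak s * expR (- c ^+ 2 / (s ^+ 2 *+ 2))) * ((c / s ^+ 2) ^+ 2)^-1.
have hb : forall j, (\int[P]_w (h (Z j w))%:E <= Tb%:E)%E.
  move=> j.
  have -> : (\int[P]_w (h (Z j w))%:E = \int[distribution P (@toLeb _ _ _ _ (Z j))]_y (h y)%:E)%E.
    by rewrite ge0_integral_distribution //; apply/measurable_EFinP.
  have -> : (\int[distribution P (@toLeb _ _ _ _ (Z j))]_y (h y)%:E = \int[normal_prob 0 s]_y (h y)%:E)%E.
    apply: eq_measure_integral => A mA _.
    exact: (HZ j A mA).
  rewrite normal_density; [|by move=> y; rewrite lee_fin|by apply/measurable_EFinP].
  under eq_integral do rewrite -EFinM.
  exact: tail_bound.
have mZh : forall j, measurable_fun setT (fun w => h (Z j w)).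
  by move=> j; apply: measurableT_comp.
have rowle : forall w, row_latency Z mu w <= c / mu + \sum_(j < 2 * Nt) mu^-1 * h (Z j w).
  move=> w; rewrite /row_latency; apply: bigmax_le.
  - rewrite addr_ge0 ?divr_ge0 ?(ltW c0) ?(ltW mu0) // sumr_ge0 // => j _.
    by rewrite mulr_ge0 ?invr_ge0 ?(ltW mu0).
  - move=> j _; rewrite (bigD1 j) //=.
    apply: (@le_trans _ _ (c / mu + mu^-1 * h (Z j w))).
      rewrite [c / mu]mulrC [`|Z j w| / mu]mulrC -mulrDr ler_wpM2l ?invr_ge0 ?(ltW mu0) //.
      by rewrite -lerBlDl le_max lexx orbT.
    by rewrite lerD2l lerDl sumr_ge0 // => i _; rewrite mulr_ge0 ?invr_ge0 ?(ltW mu0).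
have Ele : ('E_P[row_latency Z mu] <= (c / mu + (2 * Nt)%:R * (mu^-1 * Tb))%:E)%E.
  rewrite unlock.
  have mrow : measurable_fun setT (row_latency Z mu).
    apply: meas_bigmax => j; apply: measurable_funM => //.
    exact: measurableT_comp.
  apply: (@le_trans _ _ (\int[P]_w ((c / mu)%:E + \sum_(j < 2 * Nt) ((mu^-1)%:E * (h (Z j w))%:E)))%E).
    apply: ge0_le_integral => //.
    - move=> w _; rewrite lee_fin /row_latency.
      elim/big_ind: _ => //; first by move=> x y x0 y0; rewrite le_max x0.
      by move=> j _; rewrite divr_ge0 ?(ltW mu0).
    - by apply/measurable_EFinP.
    - apply: emeasurable_funD => //; apply: emeasurable_sum => j.
      by apply: emeasurable_funM => //; apply/measurable_EFinP.
    - move=> w _.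
      under eq_bigr do rewrite -EFinM.
      by rewrite sumEFin -EFinD lee_fin.
  rewrite ge0_integralD //; last 3 first.
  - by move=> w _; rewrite lee_fin divr_ge0 ?(ltW c0) ?(ltW mu0).
  - by move=> w _; rewrite sume_ge0 // => j _; rewrite mule_ge0 // lee_fin ?invr_ge0 ?(ltW mu0).
  - apply: emeasurable_sum => j.
    by apply: emeasurable_funM => //; apply/measurable_EFinP.
  rewrite integral_cst // [X in (_ * X)%E](_ : _ = 1%E) ?mule1; last exact: probability_setT.
  rewrite ge0_integral_sum //; last 2 first.
  - by move=> j; apply: emeasurable_funM => //; apply/measurable_EFinP.
  - by move=> j w _; rewrite mule_ge0 // lee_fin ?invr_ge0 ?(ltW mu0).
  apply: (@le_trans _ _ ((c / mu)%:E + \sum_(j < 2 * Nt) ((mu^-1)%:E * Tb%:E)))%E.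
    rewrite leeD2l //; apply: lee_sum => j _.
    rewrite ge0_integralZl //; last 3 first.
    - by apply/measurable_EFinP.
    - by move=> w _; rewrite lee_fin.
    - by rewrite lee_fin invr_ge0 ltW.
    by apply: lee_wpmul2l; [rewrite lee_fin invr_ge0 ltW | exact: hb].
  under eq_bigr do rewrite -EFinM.
  rewrite sumEFin -EFinD lee_fin sumr_const card_ord mulr_natl.
  by [].
rewrite /write_latency.
apply: (le_trans (lee_wpmul2l _ Ele)); first by rewrite lee_fin ler0n.
rewrite -EFinM lee_fin.
have q20 : 0 < Num.sqrt 2 :> R by rewrite sqrtr_gt0.
have qL0 : 0 < Num.sqrt L by rewrite sqrtr_gt0.
have qp0 : 0 < Num.sqrt pi :> R by rewrite sqrtr_gt0 pi_gt0.
have e1 : Num.sqrt (2 * L) = Num.sqrt 2 * Num.sqrt L by rewrite sqrtrM.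
have e2 : Num.sqrt (s ^+ 2 * pi *+ 2) = s * (Num.sqrt pi * Num.sqrt 2).
  rewrite -mulr_natr -mulrA sqrtrM ?sqr_ge0 // sqrtr_sqr ger0_norm ?(ltW s0) //.
  by rewrite sqrtrM // pi_ge0.
have eL : L = Num.sqrt L ^+ 2 by rewrite sqr_sqrtr // ltW.
have q22 : Num.sqrt 2 ^+ 2 = 2 :> R by rewrite sqr_sqrtr.
have e3 : expR (- c ^+ 2 / (s ^+ 2 *+ 2)) = Nt%:R^-1.
  have -> : - c ^+ 2 / (s ^+ 2 *+ 2) = - L.
    rewrite /c e1 !exprMn q22 -eL; field.
    by rewrite gt_eqF.
  rewrite expRN lnK // posrE ltr0n.
  by apply: leq_trans Nt2.
rewrite /Tb e3 /normal_peak e2 /c e1.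
have eG : Gmax = 3 * s by rewrite /s; field.
rewrite eG.
set q2 := Num.sqrt 2. set qL := Num.sqrt L. set qp := Num.sqrt pi.
rewrite [X in _ <= _ * (_ + 1 / (_ * X))]eL.
rewrite !natrM -q22 -/q2 -/qL.
have Nt0 : 0 < Nt%:R :> R by rewrite ltr0n; apply: leq_trans Nt2.
rewrite le_eqVlt; apply/orP; left; apply/eqP.
field.
by rewrite !gt_eqF.
Qed.
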